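(* Consider the delay differential system \[ \begin{aligned} \dot T(t)&= s-dT(t)+aT(t)\Big(1-\frac{T(t)+I(t)}{T_{\max}}\Big)-\frac{bT(t)V(t)}{1+\alpha V(t)},\\ \dot I(t)&= \frac{bT(t-\tau)V(t-\tau)}{1+\alpha V(t-\tau)}+aI(t)\Big(1-\frac{T(t)+I(t)}{T_{\max}}\Big)-\mu I(t),\\ \dot V(t)&= pI(t)-cV(t), \end{aligned} \] with positive constants $s,d,a,T_{\max},b,\alpha,\mu,p,c$, $\tau\ge0$, and nonnegative continuous initial data on $[-\tau,0]$. Then every solution satisfies \[ \limsup_{t\to\infty}T(t)\le T_0=\frac{T_{\max}}{2a}\Big[a-d+\sqrt{(a-d)^2+\tfrac{4as}{T_{\max}}}\Big], \] and hence for every sufficiently small $\epsilon>0$ there is $t_1>0$ such that $T(t)\le T_0+\epsilon$ for $t>t_1$. *)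

(* Defs.v *)
From Stdlib Require Import Reals Lra.
Open Scope R_scope.

Definition continuous_from (a : R) (f : R -> R) : Prop :=
  forall t, a <= t ->
    forall eps, 0 < eps ->
      exists delta, 0 < delta /\
        forall y, a <= y -> Rabs (y - t) < delta -> Rabs (f y - f t) < eps.

Definition infect (b alpha Tv Vv : R) : R := b * Tv * Vv / (1 + alpha * Vv).

Definition is_solution (s d a Tmax b alpha mu p c tau : R)
  (T I V : R -> R) : Prop :=
  (forall t, -tau <= t <= 0 -> 0 <= T t /\ 0 <= I t /\ 0 <= V t) /\
  continuous_from (-tau) T /\ continuous_from (-tau) I /\
  continuous_from (-tau) V /\
  (forall t, 0 < t ->
     derivable_pt_lim T t
       (s - d * T t + a * T t * (1 - (T t + I t) / Tmax)
        - infect b alpha (T t) (V t))) /\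
  (forall t, 0 < t ->
     derivable_pt_lim I t
       (infect b alpha (T (t - tau)) (V (t - tau))
        + a * I t * (1 - (T t + I t) / Tmax) - mu * I t)) /\
  (forall t, 0 < t ->
     derivable_pt_lim V t (p * I t - c * V t)).

Definition T0 (s d a Tmax : R) : R :=
  Tmax / (2 * a) * (a - d + sqrt ((a - d) ^ 2 + 4 * a * s / Tmax)).

(* Main.v *)
Require Import Defs.
From Stdlib Require Import Reals Lra Classical.
Open Scope R_scope.

Definition cont_on (t0 t1 : R) (f : R -> R) : Prop :=
  forall t, t0 <= t <= t1 ->
    forall eps, 0 < eps ->
      exists delta, 0 < delta /\
        forall y, t0 <= y <= t1 -> Rabs (y - t) < delta -> Rabs (f y - f t) < eps.

Lemma barrier (x : R -> R) t0 t1 : t0 <= t1 -> cont_on t0 t1 x -> 0 < x t0 ->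
  (forall t, t0 < t <= t1 -> x t = 0 -> (forall u, t0 <= u <= t -> 0 <= x u) -> False) ->
  forall t, t0 <= t <= t1 -> 0 < x t.
Proof.
  intros Hle Hc Hx0 Hcr.
  set (E := fun t => t0 <= t <= t1 /\ forall u, t0 <= u <= t -> 0 < x u).
  assert (Hb : bound E) by (exists t1; intros y [Hy _]; lra).
  assert (He : exists y, E y) by (exists t0; split; [lra| intros u Hu; replace u with t0 by lra; auto]).
  destruct (completeness E Hb He) as [m [Hub Hlub]].
  assert (Hm1 : t0 <= m) by (apply Hub; destruct He; unfold E; split; [lra| intros u Hu; replace u with t0 by lra; auto]).
  assert (Hm2 : m <= t1) by (apply Hlub; intros y [Hy _]; lra).
  assert (HA : forall u, t0 <= u < m -> 0 < x u).
  { intros u Hu. destruct (Rlt_dec 0 (x u)) as [h|h]; auto.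
    exfalso. assert (m <= u); [|lra]. apply Hlub. intros e [He1 He2].
    destruct (Rle_dec e u); auto. exfalso; apply h; apply He2; lra. }
  assert (HB : 0 <= x m).
  { destruct (Rle_dec 0 (x m)) as [h|h]; auto. exfalso.
    destruct (Req_dec m t0) as [e|ne]. { subst m; lra. }
    destruct (Hc m (conj Hm1 Hm2) (- x m)) as [dl [Hdl Hdl2]]; [lra|].
    set (u := Rmax t0 (m - dl/2)).
    assert (t0 <= u) by apply Rmax_l.
    assert (u < m) by (unfold u; apply Rmax_lub_lt; lra).
    assert (m - dl/2 <= u) by apply Rmax_r.
    specialize (Hdl2 u ltac:(lra)). assert (Rabs (u - m) < dl) by (rewrite Rabs_left; lra).
    specialize (Hdl2 H2). specialize (HA u ltac:(lra)).
    apply Rabs_def2 in Hdl2. lra. }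
  assert (HC : 0 < x m).
  { destruct HB as [h|h]; auto. exfalso.
    destruct (Req_dec m t0) as [e|ne]. { subst m; lra. }
    apply (Hcr m); auto. lra. intros u Hu. destruct (Req_dec u m). subst; lra. left; apply HA; lra. }
  assert (HD : m = t1).
  { destruct (Req_dec m t1); auto. exfalso.
    destruct (Hc m (conj Hm1 Hm2) (x m)) as [dl [Hdl Hdl2]]; [lra|].
    set (m' := Rmin t1 (m + dl/2)).
    assert (m' <= t1) by apply Rmin_l. assert (m' <= m + dl/2) by apply Rmin_r.
    assert (m < m') by (unfold m'; apply Rmin_glb_lt; lra).
    assert (E m').
    { split; [lra|]. intros u Hu. destruct (Rlt_dec u m). apply HA; lra.
      specialize (Hdl2 u ltac:(lra) ltac:(rewrite Rabs_right; lra)). apply Rabs_def2 in Hdl2. lra. }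
    specialize (Hub m' H3). lra. }
  intros t Ht. destruct (Rlt_dec t m). apply HA; lra. replace t with m by lra. auto.
Qed.

Lemma bounded_on (f : R -> R) t0 t1 : t0 <= t1 -> cont_on t0 t1 f ->
  exists M, forall u, t0 <= u <= t1 -> Rabs (f u) <= M.
Proof.
  intros Hle Hc.
  set (E := fun t => t0 <= t <= t1 /\ exists M, forall u, t0 <= u <= t -> Rabs (f u) <= M).
  assert (Hb : bound E) by (exists t1; intros y [Hy _]; lra).
  assert (He : E t0) by (split; [lra| exists (Rabs (f t0)); intros u Hu; replace u with t0 by lra; lra]).
  destruct (completeness E Hb (ex_intro _ t0 He)) as [m [Hub Hlub]].
  assert (Hm1 : t0 <= m) by (apply Hub; auto).
  assert (Hm2 : m <= t1) by (apply Hlub; intros y [Hy _]; lra).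
  destruct (Hc m (conj Hm1 Hm2) 1) as [dl [Hdl Hdl2]]; [lra|].
  assert (Hex : exists e, E e /\ m - dl < e).
  { destruct (classic (exists e, E e /\ m - dl < e)) as [h|h]; auto. exfalso.
    assert (m <= m - dl); [|lra]. apply Hlub. intros e He'.
    destruct (Rle_dec e (m - dl)); auto. exfalso; apply h; exists e; split; auto; lra. }
  destruct Hex as [e [[He1 [Me HMe]] He2]].
  set (m' := Rmin t1 (m + dl/2)).
  assert (m' <= t1) by apply Rmin_l. assert (m' <= m + dl/2) by apply Rmin_r.
  assert (Em : E m').
  { split. assert (m <= m') by (unfold m'; apply Rmin_glb; lra). lra.
    exists (Rmax Me (Rabs (f m) + 1)). intros u Hu.
    destruct (Rle_dec u e). eapply Rle_trans; [apply HMe; lra| apply Rmax_l].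
    eapply Rle_trans; [|apply Rmax_r].
    assert (Hem : e <= m) by (apply Hub; split; auto; exists Me; auto).
    specialize (Hdl2 u ltac:(lra) ltac:(apply Rabs_def1; lra)).
    pose proof (Rabs_triang_inv (f u) (f m)). lra. }
  specialize (Hub m' Em).
  assert (m' = t1).
  { unfold m' in *. unfold Rmin in *. destruct (Rle_dec t1 (m + dl/2)); lra. }
  rewrite H1 in Em. destruct Em as [_ [M HM]]. exists M. auto.
Qed.

Lemma cross_deriv (y : R -> R) D t t0 : t0 < t -> derivable_pt_lim y t D -> y t = 0 ->
  (forall u, t0 <= u <= t -> 0 <= y u) -> D <= 0.
Proof.
  intros Ht Hd Hy Hpos. destruct (Rle_dec D 0) as [h|h]; auto. exfalso.
  destruct (Hd D ltac:(lra)) as [dl Hdl].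
  set (h0 := - (Rmin dl (t - t0)) / 2).
  assert (Hmin1 : Rmin dl (t - t0) <= dl) by apply Rmin_l.
  assert (Hmin2 : Rmin dl (t - t0) <= t - t0) by apply Rmin_r.
  assert (Hmin3 : 0 < Rmin dl (t - t0)) by (apply Rmin_glb_lt; [apply cond_pos| lra]).
  assert (h0 < 0) by (unfold h0; lra).
  specialize (Hdl h0 ltac:(lra) ltac:(rewrite Rabs_left; unfold h0; lra)).
  apply Rabs_def2 in Hdl. rewrite Hy in Hdl.
  assert (0 <= y (t + h0)) by (apply Hpos; unfold h0; lra).
  assert (/ h0 < 0) by (apply Rinv_lt_0_compat; auto).
  unfold Rdiv in Hdl. nra.
Qed.

Lemma cont_on_from a t0 t1 f : a <= t0 -> continuous_from a f -> cont_on t0 t1 f.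
Proof.
  intros Ha Hf t Ht eps He. destruct (Hf t ltac:(lra) eps He) as [dl [Hd H]].
  exists dl; split; auto. intros y Hy Hyt. apply H; auto; lra.
Qed.

Lemma cont_on_plus t0 t1 f g : cont_on t0 t1 f -> cont_on t0 t1 g -> cont_on t0 t1 (fun u => f u + g u).
Proof.
  intros Hf Hg t Ht eps He.
  destruct (Hf t Ht (eps/2) ltac:(lra)) as [d1 [Hd1 H1]].
  destruct (Hg t Ht (eps/2) ltac:(lra)) as [d2 [Hd2 H2]].
  exists (Rmin d1 d2); split. apply Rmin_glb_lt; auto.
  intros y Hy Hyt. pose proof (Rmin_l d1 d2). pose proof (Rmin_r d1 d2).
  specialize (H1 y Hy ltac:(lra)). specialize (H2 y Hy ltac:(lra)).
  replace (f y + g y - (f t + g t)) with ((f y - f t) + (g y - g t)) by ring.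
  eapply Rle_lt_trans; [apply Rabs_triang|]. lra.
Qed.

Lemma Rmin_lip a b c d : Rabs (Rmin a b - Rmin c d) <= Rmax (Rabs (a - c)) (Rabs (b - d)).
Proof.
  pose proof (Rmax_l (Rabs (a - c)) (Rabs (b - d))).
  pose proof (Rmax_r (Rabs (a - c)) (Rabs (b - d))).
  unfold Rmin in *; destruct (Rle_dec a b); destruct (Rle_dec c d);
  revert H H0; unfold Rabs; repeat destruct Rcase_abs; intros; lra.
Qed.

Lemma cont_on_min t0 t1 f g : cont_on t0 t1 f -> cont_on t0 t1 g -> cont_on t0 t1 (fun u => Rmin (f u) (g u)).
Proof.
  intros Hf Hg t Ht eps He.
  destruct (Hf t Ht eps He) as [d1 [Hd1 H1]].
  destruct (Hg t Ht eps He) as [d2 [Hd2 H2]].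
  exists (Rmin d1 d2); split. apply Rmin_glb_lt; auto.
  intros y Hy Hyt. pose proof (Rmin_l d1 d2). pose proof (Rmin_r d1 d2).
  specialize (H1 y Hy ltac:(lra)). specialize (H2 y Hy ltac:(lra)).
  eapply Rle_lt_trans; [apply Rmin_lip|]. apply Rmax_lub_lt; auto.
Qed.

Lemma zderiv dl K u : derivable_pt_lim (fun v => dl * exp (K * v)) u (dl * (K * exp (K * u))).
Proof.
  assert (H1 : derivable_pt_lim (fun v => K * v) u K).
  { pose proof (derivable_pt_lim_scal id K u 1 (derivable_pt_lim_id u)) as H0.
    rewrite Rmult_1_r in H0. exact H0. }
  pose proof (derivable_pt_lim_comp (fun v => K * v) exp u K (exp (K*u)) H1 (derivable_pt_lim_exp _)).
  pose proof (derivable_pt_lim_scal _ dl u _ H).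
  replace (K * exp (K*u)) with (exp (K*u) * K) by ring. exact H0.
Qed.

Lemma cont_on_z t0 t1 dl K : cont_on t0 t1 (fun v => dl * exp (K * v)).
Proof.
  intros t Ht eps He.
  assert (Hc : continuity_pt (fun v => dl * exp (K * v)) t).
  { apply derivable_continuous_pt. exists (dl * (K * exp (K * t))). apply zderiv. }
  destruct (Hc eps He) as [x [Hx H]]. exists x; split; auto.
  intros y Hy Hyt. destruct (Req_dec y t). subst. rewrite Rminus_diag, Rabs_R0; auto.
  apply (H y). split. split; [exact I| auto]. exact Hyt.
Qed.

Lemma Rdiv_le_0_compat x y : 0 <= x -> 0 < y -> 0 <= x / y.
Proof. intros. unfold Rdiv. apply Rmult_le_pos; auto. left; apply Rinv_0_lt_compat; auto. Qed.

Lemma Rabs_le_between x B : Rabs x <= B -> -B <= x <= B.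
Proof. unfold Rabs; destruct Rcase_abs; lra. Qed.

Lemma logi_lb a Tmax z B X : 0 < a -> 0 < Tmax -> 0 <= z -> -(2*B) <= X ->
  a * (-z) * (1 - X / Tmax) >= - (a * (1 + 2*B/Tmax)) * z.
Proof.
  intros. assert (0 <= (2*B + X) / Tmax) by (apply Rdiv_le_0_compat; lra).
  replace (a * (-z) * (1 - X / Tmax) - (- (a * (1 + 2*B/Tmax)) * z)) with (a * z * ((2*B + X)/Tmax)) by (field; lra).
  assert (0 <= a * z * ((2*B + X)/Tmax)) by (apply Rmult_le_pos; [nra|auto]). lra.
Qed.

Lemma inf_lb1 b alpha z B Vt : 0 < b -> 0 < z -> 0 <= B -> -B <= Vt -> 1/2 <= 1 + alpha*Vt ->
  - infect b alpha (-z) Vt >= - (2*b*B) * z.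
Proof.
  intros. unfold infect. set (q := / (1 + alpha*Vt)).
  assert (0 < q) by (apply Rinv_0_lt_compat; lra).
  assert (q <= 2). { unfold q. replace 2 with (/ (1/2)) by field. apply Rinv_le_contravar; lra. }
  unfold Rdiv. fold q.
  assert (0 < b*z*q) by (apply Rmult_lt_0_compat; [nra|auto]).
  assert (b*z*q*Vt >= b*z*q*(-B)) by nra.
  assert (b*z*q*B <= b*z*2*B) by (apply Rmult_le_compat_r; auto; nra).
  replace (- (b * - z * Vt * q)) with (b*z*q*Vt) by ring. nra.
Qed.

Lemma inf_lb2 b alpha z B Td Vd : 0 < b -> 0 < z -> -z <= Td -> -z <= Vd -> Rabs Td <= B -> Rabs Vd <= B ->
  1/2 <= 1 + alpha*Vd -> infect b alpha Td Vd >= - (2*b*B) * z.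
Proof.
  intros. unfold infect. set (q := / (1 + alpha*Vd)).
  assert (0 < q) by (apply Rinv_0_lt_compat; lra).
  assert (q <= 2). { unfold q. replace 2 with (/ (1/2)) by field. apply Rinv_le_contravar; lra. }
  unfold Rdiv. fold q.
  assert (HTV : Td * Vd >= - B * z).
  { apply Rabs_le_between in H3. apply Rabs_le_between in H4.
    destruct (Rle_dec 0 Td); destruct (Rle_dec 0 Vd).
    - assert (0 <= Td*Vd) by (apply Rmult_le_pos; auto). nra.
    - assert (0 <= Td*(Vd+z)) by (apply Rmult_le_pos; lra).
      assert (0 <= (B-Td)*z) by (apply Rmult_le_pos; lra). nra.
    - assert (0 <= Vd*(Td+z)) by (apply Rmult_le_pos; lra).
      assert (0 <= (B-Vd)*z) by (apply Rmult_le_pos; lra). nra.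
    - assert (0 <= (-Td)*(-Vd)) by (apply Rmult_le_pos; lra). nra. }
  assert (0 <= B) by (pose proof (Rabs_pos Td); lra).
  replace (b * Td * Vd * q) with (b * (Td*Vd) * q) by ring.
  destruct (Rle_dec 0 (Td*Vd)).
  - assert (0 <= b * (Td*Vd) * q) by (apply Rmult_le_pos; [apply Rmult_le_pos|]; lra).
    assert (0 <= b*B*z) by (apply Rmult_le_pos; [apply Rmult_le_pos|]; lra). nra.
  - assert (b * (Td*Vd) * q >= b*(Td*Vd)*2).
    { assert (0 <= (-(b*(Td*Vd))) * (2 - q)) by (apply Rmult_le_pos; nra). nra. }
    nra.
Qed.

Definition Kp (a Tmax b p B : R) := a * (1 + 2*B/Tmax) + 2*b*B + p.

Lemma Kp_pos a Tmax b p B : 0 < a -> 0 < Tmax -> 0 < b -> 0 < p -> 0 <= B -> 0 < Kp a Tmax b p B.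
Proof. intros. unfold Kp. assert (0 <= B/Tmax) by (apply Rdiv_le_0_compat; lra). nra. Qed.

Lemma LTb s d a Tmax b alpha p z B It Vt : 0 < s -> 0 < d -> 0 < a -> 0 < Tmax -> 0 < b -> 0 < p ->
  0 < z -> z <= B -> -B <= It -> -B <= Vt -> 1/2 <= 1 + alpha*Vt ->
  s - d*(-z) + a*(-z)*(1 - (-z + It)/Tmax) - infect b alpha (-z) Vt >= - Kp a Tmax b p B * z.
Proof.
  intros. pose proof (logi_lb a Tmax z B (-z + It) H1 H2 ltac:(lra) ltac:(lra)).
  pose proof (inf_lb1 b alpha z B Vt H3 H5 ltac:(lra) H8 H9). unfold Kp.
  assert (0 < d*z) by nra. assert (0 < p*z) by nra.
  replace (- (a * (1 + 2 * B / Tmax) + 2 * b * B + p) * z) with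
    (- (a * (1 + 2 * B / Tmax)) * z + - (2*b*B)*z - p*z) by ring.
  replace (s - d * - z) with (s + d*z) by ring. lra.
Qed.

Lemma LIb a Tmax b alpha mu p z B Tt Td Vd : 0 < a -> 0 < Tmax -> 0 < b -> 0 < mu -> 0 < p ->
  0 < z -> z <= B -> -B <= Tt -> -z <= Td -> -z <= Vd -> Rabs Td <= B -> Rabs Vd <= B ->
  1/2 <= 1 + alpha*Vd ->
  infect b alpha Td Vd + a*(-z)*(1 - (Tt + -z)/Tmax) - mu*(-z) >= - Kp a Tmax b p B * z.
Proof.
  intros. pose proof (logi_lb a Tmax z B (Tt + -z) H H0 ltac:(lra) ltac:(lra)).
  pose proof (inf_lb2 b alpha z B Td Vd H1 H4 H7 H8 H9 H10 H11). unfold Kp.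
  assert (0 < mu*z) by nra. assert (0 < p*z) by nra.
  replace (- (a * (1 + 2 * B / Tmax) + 2 * b * B + p) * z) with
    (- (2*b*B)*z + - (a * (1 + 2 * B / Tmax)) * z - p*z) by ring.
  replace (mu * - z) with (-(mu*z)) by ring. lra.
Qed.

Lemma LVb a Tmax b p c z B It : 0 < a -> 0 < Tmax -> 0 < b -> 0 < p -> 0 < c -> 0 < z -> 0 <= B ->
  -z <= It -> p*It - c*(-z) >= - Kp a Tmax b p B * z.
Proof.
  intros. unfold Kp. assert (0 <= B/Tmax) by (apply Rdiv_le_0_compat; lra).
  assert (0 <= (a * (1 + 2 * B / Tmax) + 2 * b * B)*z) by (apply Rmult_le_pos; nra).
  assert (0 < c*z) by nra. assert (p*It >= -(p*z)) by nra.
  replace (- (a * (1 + 2 * B / Tmax) + 2 * b * B + p) * z) with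
    (- ((a * (1 + 2 * B / Tmax) + 2 * b * B)*z) - p*z) by ring.
  replace (c * - z) with (-(c*z)) by ring. lra.
Qed.

Lemma Rmin_cases x y : Rmin x y = x \/ Rmin x y = y.
Proof. unfold Rmin; destruct Rle_dec; auto. Qed.

Lemma min3_ge x y w : 0 <= Rmin (Rmin x y) w -> 0 <= x /\ 0 <= y /\ 0 <= w.
Proof.
  intros H. pose proof (Rmin_l (Rmin x y) w). pose proof (Rmin_r (Rmin x y) w).
  pose proof (Rmin_l x y). pose proof (Rmin_r x y). lra.
Qed.

Lemma positivity (s d a Tmax b alpha mu p c tau : R) (T I V : R -> R) :
  0 < s -> 0 < d -> 0 < a -> 0 < Tmax -> 0 < b -> 0 < alpha ->
  0 < mu -> 0 < p -> 0 < c -> 0 <= tau ->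
  is_solution s d a Tmax b alpha mu p c tau T I V ->
  forall t, -tau <= t -> 0 <= T t /\ 0 <= I t /\ 0 <= V t.
Proof.
  intros Hs Hd Ha HTm Hb Hal Hmu Hp Hc Htau Hsol.
  destruct Hsol as [Hinit [cT [cI [cV [dT [dI dV]]]]]].
  intros t Ht. destruct (Rle_dec t 0) as [Ht0|Ht0]. apply Hinit; lra.
  assert (Htp : 0 < t) by lra.
  assert (cT' := cont_on_from (-tau) (-tau) t T ltac:(lra) cT).
  assert (cI' := cont_on_from (-tau) (-tau) t I ltac:(lra) cI).
  assert (cV' := cont_on_from (-tau) (-tau) t V ltac:(lra) cV).
  destruct (bounded_on T (-tau) t ltac:(lra) cT') as [BT HBT].
  destruct (bounded_on I (-tau) t ltac:(lra) cI') as [BI HBI].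
  destruct (bounded_on V (-tau) t ltac:(lra) cV') as [BV HBV].
  set (B := Rabs BT + Rabs BI + Rabs BV).
  assert (HB0 : 0 <= B) by (unfold B; pose proof (Rabs_pos BT); pose proof (Rabs_pos BI); pose proof (Rabs_pos BV); lra).
  assert (HBT' : forall u, -tau <= u <= t -> Rabs (T u) <= B).
  { intros u Hu. specialize (HBT u Hu). unfold B. pose proof (Rle_abs BT); pose proof (Rabs_pos BI); pose proof (Rabs_pos BV); lra. }
  assert (HBI' : forall u, -tau <= u <= t -> Rabs (I u) <= B).
  { intros u Hu. specialize (HBI u Hu). unfold B. pose proof (Rle_abs BI); pose proof (Rabs_pos BT); pose proof (Rabs_pos BV); lra. }
  assert (HBV' : forall u, -tau <= u <= t -> Rabs (V u) <= B).
  { intros u Hu. specialize (HBV u Hu). unfold B. pose proof (Rle_abs BV); pose proof (Rabs_pos BI); pose proof (Rabs_pos BT); lra. }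
  clear HBT HBI HBV.
  set (Kq := Kp a Tmax b p B).
  set (K := Kq + 1).
  assert (HKq : 0 < Kq) by (apply Kp_pos; auto).
  set (E1 := exp (K * t)).
  assert (HE1 : 0 < E1) by apply exp_pos.
  assert (Claim : forall dl, 0 < dl -> dl * E1 <= / (2 * alpha) ->
     forall u, 0 <= u <= t ->
       0 < Rmin (Rmin (T u + dl * exp (K * u)) (I u + dl * exp (K * u))) (V u + dl * exp (K * u))).
  { intros dl Hdl HdlE.
    set (z := fun v => dl * exp (K * v)).
    assert (zpos : forall v, 0 < z v) by (intro v; unfold z; apply Rmult_lt_0_compat; auto; apply exp_pos).
    assert (zmono : forall v w, v <= w -> z v <= z w).
    { intros v w Hvw. unfold z. apply Rmult_le_compat_l; [lra|].
      destruct Hvw as [h|h]. left; apply exp_increasing. apply Rmult_lt_compat_l; unfold K; lra. subst; lra. }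
    apply (barrier (fun u => Rmin (Rmin (T u + z u) (I u + z u)) (V u + z u)) 0 t).
    - lra.
    - apply cont_on_min; [apply cont_on_min|]; apply cont_on_plus; try apply cont_on_z;
      eapply cont_on_from; eauto; lra.
    - destruct (Hinit 0 ltac:(lra)) as [h1 [h2 h3]]. pose proof (zpos 0).
      repeat apply Rmin_glb_lt; lra.
    - intros t2 Ht2 Hx0 Hxpos.
      assert (Hzt2 : z t2 <= / (2 * alpha)).
      { eapply Rle_trans; [apply (zmono t2 t); lra|]. exact HdlE. }
      assert (Hge : forall u, -tau <= u <= t2 -> -z t2 <= T u /\ -z t2 <= I u /\ -z t2 <= V u).
      { intros u Hu. pose proof (zpos t2). destruct (Rle_dec u 0).
        - destruct (Hinit u ltac:(lra)) as [h1 [h2 h3]]. lra.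
        - destruct (min3_ge _ _ _ (Hxpos u ltac:(lra))) as [h1 [h2 h3]].
          pose proof (zmono u t2 ltac:(lra)). lra. }
      assert (HaV : forall u, -tau <= u <= t2 -> 1/2 <= 1 + alpha * V u).
      { intros u Hu. destruct (Hge u Hu) as [_ [_ h]].
        assert (alpha * (- z t2) >= -(1/2)).
        { assert (alpha * z t2 <= alpha * / (2*alpha)) by (apply Rmult_le_compat_l; lra).
          replace (alpha * / (2*alpha)) with (1/2) in H by (field; lra). lra. }
        nra. }
      assert (Hzd : forall C D, derivable_pt_lim C t2 D -> C t2 + z t2 = 0 ->
                  (forall u, 0 <= u <= t2 -> 0 <= C u + z u) -> D + K * z t2 <= 0).
      { intros C D HCd HC0 HCp.
        pose proof (derivable_pt_lim_plus C z t2 D _ HCd (zderiv dl K t2)) as HD.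
        pose proof (cross_deriv (C + z)%F _ t2 0 ltac:(lra) HD HC0 HCp).
        unfold z in *. lra. }
      assert (HBt2 : -tau <= t2 <= t) by lra.
      pose proof (zpos t2) as Hz2.
      destruct (Rmin_cases (Rmin (T t2 + z t2) (I t2 + z t2)) (V t2 + z t2)) as [e1|e1];
        rewrite e1 in Hx0; [destruct (Rmin_cases (T t2 + z t2) (I t2 + z t2)) as [e2|e2]; rewrite e2 in Hx0|].
      +
        assert (HD := Hzd T _ (dT t2 ltac:(lra)) Hx0 (fun u Hu => proj1 (min3_ge _ _ _ (Hxpos u Hu)))).
        assert (HTz : T t2 = - z t2) by lra.
        pose proof (Rabs_le_between _ _ (HBT' t2 HBt2)).
        pose proof (Rabs_le_between _ _ (HBI' t2 HBt2)).
        pose proof (Rabs_le_between _ _ (HBV' t2 HBt2)).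
        pose proof (LTb s d a Tmax b alpha p (z t2) B (I t2) (V t2) Hs Hd Ha HTm Hb Hp Hz2
                      ltac:(lra) ltac:(lra) ltac:(lra) (HaV t2 ltac:(lra))).
        rewrite HTz in HD. fold Kq in H2. unfold K in HD. rewrite Rmult_plus_distr_r, Rmult_1_l in HD. rewrite Ropp_mult_distr_l_reverse in *. lra.
      +
        assert (HD := Hzd I _ (dI t2 ltac:(lra)) Hx0 (fun u Hu => proj1 (proj2 (min3_ge _ _ _ (Hxpos u Hu))))).
        assert (HIz : I t2 = - z t2) by lra.
        pose proof (Rabs_le_between _ _ (HBT' t2 HBt2)).
        pose proof (Rabs_le_between _ _ (HBI' t2 HBt2)).
        assert (Hdel : -tau <= t2 - tau <= t2) by lra.
        destruct (Hge _ Hdel) as [g1 [_ g3]].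
        pose proof (LIb a Tmax b alpha mu p (z t2) B (T t2) (T (t2 - tau)) (V (t2 - tau))
                      Ha HTm Hb Hmu Hp Hz2 ltac:(lra) ltac:(lra) g1 g3
                      (HBT' (t2 - tau) ltac:(lra)) (HBV' (t2 - tau) ltac:(lra)) (HaV _ Hdel)).
        rewrite HIz in HD. fold Kq in H1. unfold K in HD. rewrite Rmult_plus_distr_r, Rmult_1_l in HD. rewrite Ropp_mult_distr_l_reverse in *.
        lra.
      +
        assert (HD := Hzd V _ (dV t2 ltac:(lra)) Hx0 (fun u Hu => proj2 (proj2 (min3_ge _ _ _ (Hxpos u Hu))))).
        assert (HVz : V t2 = - z t2) by lra.
        destruct (Hge t2 ltac:(lra)) as [_ [g2 _]].
        pose proof (LVb a Tmax b p c (z t2) B (I t2) Ha HTm Hb Hp Hc Hz2 HB0 g2).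
        rewrite HVz in HD. fold Kq in H. unfold K in HD. rewrite Rmult_plus_distr_r, Rmult_1_l in HD. rewrite Ropp_mult_distr_l_reverse in *. lra. }
  assert (Hfin : forall C : R -> R,
     (forall dl, 0 < dl -> dl * E1 <= / (2 * alpha) -> 0 <= C t + dl * E1) -> 0 <= C t).
  { intros C HC. destruct (Rle_dec 0 (C t)) as [h|h]; auto. exfalso.
    set (dl := Rmin (/ (2*alpha) / E1) (- C t / 2 / E1)).
    assert (0 < / (2*alpha)) by (apply Rinv_0_lt_compat; lra).
    assert (0 < dl) by (unfold dl; apply Rmin_glb_lt; apply Rdiv_lt_0_compat; lra).
    assert (dl * E1 <= / (2*alpha)).
    { pose proof (Rmin_l (/ (2*alpha) / E1) (- C t / 2 / E1)).
      apply Rmult_le_compat_r with (r := E1) in H1; [|lra].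
      replace (/ (2 * alpha) / E1 * E1) with (/ (2 * alpha)) in H1 by (field; lra). exact H1. }
    assert (dl * E1 <= - C t / 2).
    { pose proof (Rmin_r (/ (2*alpha) / E1) (- C t / 2 / E1)).
      apply Rmult_le_compat_r with (r := E1) in H2; [|lra].
      replace (- C t / 2 / E1 * E1) with (- C t / 2) in H2 by (field; lra). exact H2. }
    specialize (HC dl H0 H1). lra. }
  split; [|split]; apply Hfin; intros dl Hdl HdlE;
    destruct (min3_ge _ _ _ (Rlt_le _ _ (Claim dl Hdl HdlE t ltac:(lra)))) as [h1 [h2 h3]];
    assumption.
Qed.

Lemma cont_on_cminus t0 t1 C f : cont_on t0 t1 f -> cont_on t0 t1 (fun u => C - f u).
Proof.
  intros Hf t Ht eps He. destruct (Hf t Ht eps He) as [dl [Hdl H]]. exists dl; split; auto.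
  intros y Hy Hyt. replace (C - f y - (C - f t)) with (- (f y - f t)) by ring.
  rewrite Rabs_Ropp. auto.
Qed.

Lemma Fbound s d a Tmax eps x : 0 < s -> 0 < d -> 0 < a -> 0 < Tmax -> 0 < eps ->
  T0 s d a Tmax + eps <= x ->
  s - d * x + a * x * (1 - x / Tmax) <= - (a * eps^2 / Tmax).
Proof.
  intros Hs Hd Ha HT He Hx. unfold T0 in Hx.
  set (D := (a - d) ^ 2 + 4 * a * s / Tmax) in *.
  assert (HD : 0 <= D).
  { unfold D. assert (0 < 4*a*s) by (repeat apply Rmult_lt_0_compat; lra).
    assert (0 <= 4 * a * s / Tmax) by (apply Rdiv_le_0_compat; lra).
    pose proof (pow2_ge_0 (a - d)). lra. }
  set (S := sqrt D) in *.
  assert (HS : S * S = D) by (apply sqrt_sqrt; auto).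
  assert (HS0 : 0 <= S) by apply sqrt_pos.
  set (A := Tmax / (2 * a) * (a - d + S)) in *.
  set (A1 := Tmax / (2 * a) * (a - d - S)).
  assert (Hid : s - d * x + a * x * (1 - x / Tmax) =
     - (a / Tmax) * ((x - A) * (x - A1)) + Tmax / (4 * a) * (D - S * S)).
  { unfold A, A1, D. field. lra. }
  rewrite Hid, HS, Rminus_diag, Rmult_0_r, Rplus_0_r.
  assert (HA1 : A - A1 = Tmax * S / a) by (unfold A, A1; field; lra).
  assert (0 <= Tmax * S / a) by (apply Rdiv_le_0_compat; nra).
  assert (eps * eps <= (x - A) * (x - A1)) by (apply Rmult_le_compat; lra).
  assert (0 < a / Tmax) by (apply Rdiv_lt_0_compat; lra).
  replace (- (a * eps ^ 2 / Tmax)) with (- (a / Tmax) * (eps * eps)) by (field; lra).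
  nra.
Qed.

Theorem lemma3 (s d a Tmax b alpha mu p c tau : R) (T I V : R -> R) :
  0 < s -> 0 < d -> 0 < a -> 0 < Tmax -> 0 < b -> 0 < alpha ->
  0 < mu -> 0 < p -> 0 < c -> 0 <= tau ->
  is_solution s d a Tmax b alpha mu p c tau T I V ->
  forall eps, 0 < eps ->
    exists t1, 0 < t1 /\ forall t, t1 < t -> T t <= T0 s d a Tmax + eps.
Proof.
  intros Hs Hd Ha HTm Hb Hal Hmu Hp Hc Htau Hsol eps Heps.
  pose proof (positivity s d a Tmax b alpha mu p c tau T I V Hs Hd Ha HTm Hb Hal Hmu Hp Hc Htau Hsol) as Hpos.
  destruct Hsol as [Hinit [cT [cI [cV [dT [dI dV]]]]]].
  set (Texpr := fun t => s - d * T t + a * T t * (1 - (T t + I t) / Tmax)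
        - infect b alpha (T t) (V t)).
  set (F := fun x => s - d * x + a * x * (1 - x / Tmax)).
  set (kap := a * eps ^ 2 / Tmax).
  assert (Hkap : 0 < kap) by (unfold kap; apply Rdiv_lt_0_compat; [apply Rmult_lt_0_compat; [lra| apply pow_lt; lra]| lra]).
  assert (HTF : forall t, 0 < t -> Texpr t <= F (T t)).
  { intros t Ht. destruct (Hpos t ltac:(lra)) as [h1 [h2 h3]]. unfold Texpr, F, infect.
    assert (0 <= b * T t * V t / (1 + alpha * V t)).
    { apply Rdiv_le_0_compat. repeat apply Rmult_le_pos; lra. nra. }
    assert (0 <= a * T t * I t / Tmax).
    { apply Rdiv_le_0_compat. repeat apply Rmult_le_pos; lra. lra. }
    replace (a * T t * (1 - (T t + I t) / Tmax)) with (a * T t * (1 - T t / Tmax) - a * T t * I t / Tmax)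
      by (field; lra). lra. }
  assert (Hneg : forall t, 0 < t -> T0 s d a Tmax + eps <= T t -> Texpr t <= - kap).
  { intros t Ht Hx. eapply Rle_trans; [apply HTF; auto|]. apply Fbound; auto. }
  assert (Hreach : exists tb, 1 <= tb /\ T tb <= T0 s d a Tmax + eps).
  { destruct (classic (exists tb, 1 <= tb /\ T tb <= T0 s d a Tmax + eps)) as [h|h]; auto.
    exfalso.
    assert (Hall : forall u, 1 <= u -> T0 s d a Tmax + eps < T u).
    { intros u Hu. destruct (Rlt_dec (T0 s d a Tmax + eps) (T u)) as [h'|h']; auto.
      exfalso; apply h; exists u; split; auto; lra. }
    set (L := (T 1 - T0 s d a Tmax - eps) / kap + 1).
    assert (HL0 : 0 <= (T 1 - T0 s d a Tmax - eps) / kap).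
    { apply Rdiv_le_0_compat; [|auto]. specialize (Hall 1 ltac:(lra)). lra. }
    destruct (MVT_cor2 T Texpr 1 (1 + L) ltac:(unfold L; lra)) as [cc [Hcc1 Hcc2]].
    { intros cc Hcc. apply dT. lra. }
    pose proof (Hneg cc ltac:(lra) ltac:(left; apply Hall; lra)).
    pose proof (Hall (1 + L) ltac:(unfold L; lra)).
    assert (Texpr cc * (1 + L - 1) <= - kap * L).
    { replace (1 + L - 1) with L by ring. assert (0 < L) by (unfold L; lra). nra. }
    assert (kap * L = T 1 - T0 s d a Tmax - eps + kap).
    { unfold L. field. lra. }
    lra. }
  destruct Hreach as [tb [Htb1 Htb2]].
  exists tb. split; [lra|]. intros t Ht.
  destruct (Rle_dec (T t) (T0 s d a Tmax + eps)) as [h|h]; auto. exfalso.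
  set (eta := (T t - T0 s d a Tmax - eps) / 2).
  assert (Heta : 0 < eta) by (unfold eta; lra).
  assert (Hbar := barrier (fun u => (T0 s d a Tmax + eps + eta) - T u) tb t ltac:(lra)).
  assert (cont_on tb t (fun u => (T0 s d a Tmax + eps + eta) - T u)).
  { apply cont_on_cminus. apply (cont_on_from (-tau)); [lra| exact cT]. }
  specialize (Hbar H ltac:(simpl; lra)).
  assert (Hcr : forall t3, tb < t3 <= t -> T0 s d a Tmax + eps + eta - T t3 = 0 ->
     (forall u, tb <= u <= t3 -> 0 <= T0 s d a Tmax + eps + eta - T u) -> False).
  { intros t3 Ht3 H0 Hu.
    assert (HD : derivable_pt_lim (fun u => T0 s d a Tmax + eps + eta - T u) t3 (0 - Texpr t3)).
    { apply (derivable_pt_lim_minus (fun _ => T0 s d a Tmax + eps + eta) T).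
      apply derivable_pt_lim_const. apply dT. lra. }
    pose proof (cross_deriv _ _ t3 tb ltac:(lra) HD H0 Hu).
    pose proof (Hneg t3 ltac:(lra) ltac:(lra)). lra. }
  specialize (Hbar Hcr t ltac:(lra)). simpl in Hbar. unfold eta in Hbar. lra.
Qed.
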